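(* For every intuitionistic conditional nested sequent $\Gamma$: if $\Gamma$ is derivable in the nested calculus $\mathsf{N.IntCK}$, then its formula interpretation $i(\Gamma)$ is derivable in the Hilbert system $\mathsf{IntCK}$.
   Context: Language $\mathcal{L}$: formulas $\varphi ::= p \mid \bot \mid \varphi\wedge\varphi \mid \varphi\vee\varphi \mid \varphi\to\varphi \mid \varphi \mathrel{\Box\!\!\to} \varphi \mid \varphi \mathrel{\Diamond\!\!\to}\varphi$ ($p$ ranging over a countable set of atoms); $\neg\varphi:=\varphi\to\bot$, $\top:=\neg\bot$, $\varphi\leftrightarrow\psi := (\varphi\to\psi)\wedge(\psi\to\varphi)$. Hilbert system $\mathsf{IntCK}$: any axiomatisation of intuitionistic propositional logic in $\mathcal{L}$ with modus ponens, plus the rules RA$_\Box$: from $\varphi\leftrightarrow\rho$ infer $(\varphi\mathrel{\Box\!\!\to}\psi)\leftrightarrow(\rho\mathrel{\Box\!\!\to}\psi)$; RC$_\Box$: from $\psi\leftrightarrow\chi$ infer $(\varphi\mathrel{\Box\!\!\to}\psi)\leftrightarrow(\varphi\mathrel{\Box\!\!\to}\chi)$; RA$_\Diamond$, RC$_\Diamond$: the same with $\mathrel{\Diamond\!\!\to}$; and axioms CM$_\Box$: $(\varphi\mathrel{\Box\!\!\to}\psi\wedge\chi)\to(\varphi\mathrel{\Box\!\!\to}\psi)\wedge(\varphi\mathrel{\Box\!\!\to}\chi)$; CC$_\Box$: $(\varphi\mathrel{\Box\!\!\to}\psi)\wedge(\varphi\mathrel{\Box\!\!\to}\chi)\to(\varphi\mathrel{\Box\!\!\to}\psi\wedge\chi)$;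 CN$_\Box$: $\varphi\mathrel{\Box\!\!\to}\top$; CM$_\Diamond$: $(\varphi\mathrel{\Diamond\!\!\to}\psi)\vee(\varphi\mathrel{\Diamond\!\!\to}\chi)\to(\varphi\mathrel{\Diamond\!\!\to}\psi\vee\chi)$; CC$_\Diamond$: $(\varphi\mathrel{\Diamond\!\!\to}\psi\vee\chi)\to(\varphi\mathrel{\Diamond\!\!\to}\psi)\vee(\varphi\mathrel{\Diamond\!\!\to}\chi)$; CN$_\Diamond$: $\neg(\varphi\mathrel{\Diamond\!\!\to}\bot)$; CW: $(\varphi\mathrel{\Diamond\!\!\to}\psi)\wedge(\varphi\mathrel{\Box\!\!\to}\chi)\to(\varphi\mathrel{\Diamond\!\!\to}\psi\wedge\chi)$; CFS: $((\varphi\mathrel{\Diamond\!\!\to}\psi)\to(\varphi\mathrel{\Box\!\!\to}\chi))\to(\varphi\mathrel{\Box\!\!\to}(\psi\to\chi))$. Nested sequents: each formula $\varphi$ gets an input polarity $\varphi^\bullet$ or output polarity $\varphi^\circ$. Input sequents $\Lambda ::= \emptyset \mid \Lambda,\varphi^\bullet \mid \Lambda,[\psi:\Lambda]$ and nested sequents $\Gamma ::= \Lambda,\varphi^\circ \mid \Lambda,[\psi:\Gamma]$, where the index $\psi$ of a component $[\psi:\cdot]$ is an unpolarised formula; thus a nested sequent contains exactly one output formula (commas are treated as associative and commutative, as usual). Formula interpretation: $i(\emptyset)=\top$; $i(\Lambda,\varphi^\bullet)=i(\Lambda)\wedge\varphi$; $i(\Lambda,[\psi:\Lambda'])=i(\Lambda)\wedge(\psi\mathrel{\Diamond\!\!\to}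 i(\Lambda'))$; $i(\Lambda,\varphi^\circ)=i(\Lambda)\to\varphi$; $i(\Lambda,[\psi:\Gamma])=i(\Lambda)\to(\psi\mathrel{\Box\!\!\to} i(\Gamma))$. A context $\Gamma\{\ \}$ is a (nested or input) sequent with one hole $\{\ \}$ (possibly inside nested components), to be filled with a sequent; rules are applied only when premisses and conclusion are nested sequents. $\Gamma^{\downarrow}\{\ \}$ denotes $\Gamma\{\ \}$ with its output formula removed. Rules of $\mathsf{N.IntCK}$ (premisses / conclusion): init: $\Gamma\{p^\bullet,p^\circ\}$ (no premiss, $p$ atom); $\bot^\bullet$: $\Gamma\{\bot^\bullet\}$ (no premiss); $\wedge^\bullet$: $\Gamma\{\varphi^\bullet,\psi^\bullet\}$ / $\Gamma\{(\varphi\wedge\psi)^\bullet\}$; $\wedge^\circ$: $\Gamma\{\varphi^\circ\}$, $\Gamma\{\psi^\circ\}$ / $\Gamma\{(\varphi\wedge\psi)^\circ\}$; $\vee^\bullet$: $\Gamma\{\varphi^\bullet\}$, $\Gamma\{\psi^\bullet\}$ / $\Gamma\{(\varphi\vee\psi)^\bullet\}$; $\vee^\circ$: $\Gamma\{\varphi^\circ\}$ / $\Gamma\{(\varphi\vee\psi)^\circ\}$ and $\Gamma\{\psi^\circ\}$ / $\Gamma\{(\varphi\vee\psi)^\circ\}$; $\to^\bullet$: $\Gamma^\downarrow\{(\varphi\to\psi)^\bullet,\varphi^\circ\}$, $\Gamma\{\psi^\bullet\}$ / $\Gamma\{(\varphi\to\psi)^\bullet\}$; $\to^\circ$: $\Gamma\{\varphi^\bullet,\psi^\circ\}$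 / $\Gamma\{(\varphi\to\psi)^\circ\}$; $\Box^\bullet$: $\varphi^\bullet,\eta^\circ$ and $\eta^\bullet,\varphi^\circ$ and $\Gamma\{(\varphi\mathrel{\Box\!\!\to}\psi)^\bullet,[\eta:\psi^\bullet,\Delta]\}$ / $\Gamma\{(\varphi\mathrel{\Box\!\!\to}\psi)^\bullet,[\eta:\Delta]\}$; $\Box^\circ$: $\Gamma\{[\varphi:\psi^\circ]\}$ / $\Gamma\{(\varphi\mathrel{\Box\!\!\to}\psi)^\circ\}$; $\Diamond^\bullet$: $\Gamma\{[\varphi:\psi^\bullet]\}$ / $\Gamma\{(\varphi\mathrel{\Diamond\!\!\to}\psi)^\bullet\}$; $\Diamond^\circ$: $\varphi^\bullet,\eta^\circ$ and $\eta^\bullet,\varphi^\circ$ and $\Gamma\{[\eta:\psi^\circ,\Delta]\}$ / $\Gamma\{(\varphi\mathrel{\Diamond\!\!\to}\psi)^\circ,[\eta:\Delta]\}$. A derivation is a finite tree of rule instances whose leaves are instances of init or $\bot^\bullet$. *)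

(* Defs.v *)
From Stdlib Require Import List.
Import ListNotations.

Inductive form : Type :=
| Var : nat -> form
| Bot : form
| And : form -> form -> form
| Or  : form -> form -> form
| Imp : form -> form -> form
| Box : form -> form -> form   (* phi []-> psi *)
| Dia : form -> form -> form.  (* phi <>-> psi *)

Definition Neg (a : form) : form := Imp a Bot.
Definition Top : form := Neg Bot.
Definition Iff (a b : form) : form := And (Imp a b) (Imp b a).

Inductive prf : form -> Prop :=
| ax1 a b : prf (Imp a (Imp b a))
| ax2 a b c : prf (Imp (Imp a (Imp b c)) (Imp (Imp a b) (Imp a c)))
| ax3 a b : prf (Imp (And a b) a)
| ax4 a b : prf (Imp (And a b) b)
| ax5 a b : prf (Imp a (Imp b (And a b)))
| ax6 a b : prf (Imp a (Or a b))
| ax7 a b : prf (Imp b (Or a b))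
| ax8 a b c : prf (Imp (Imp a c) (Imp (Imp b c) (Imp (Or a b) c)))
| ax9 a : prf (Imp Bot a)
| mp a b : prf (Imp a b) -> prf a -> prf b
| RA_box a r b : prf (Iff a r) -> prf (Iff (Box a b) (Box r b))
| RC_box a b c : prf (Iff b c) -> prf (Iff (Box a b) (Box a c))
| RA_dia a r b : prf (Iff a r) -> prf (Iff (Dia a b) (Dia r b))
| RC_dia a b c : prf (Iff b c) -> prf (Iff (Dia a b) (Dia a c))
| CM_box a b c : prf (Imp (Box a (And b c)) (And (Box a b) (Box a c)))
| CC_box a b c : prf (Imp (And (Box a b) (Box a c)) (Box a (And b c)))
| CN_box a : prf (Box a Top)
| CM_dia a b c : prf (Imp (Or (Dia a b) (Dia a c)) (Dia a (Or b c)))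
| CC_dia a b c : prf (Imp (Dia a (Or b c)) (Or (Dia a b) (Dia a c)))
| CN_dia a : prf (Neg (Dia a Bot))
| CW a b c : prf (Imp (And (Dia a b) (Box a c)) (Dia a (And b c)))
| CFS a b c : prf (Imp (Imp (Dia a b) (Box a c)) (Box a (Imp b c))).

(** * Nested sequents
    A sequent is a list of items; commas are associative and commutative,
    which is handled by closing derivability under (deep) permutation. *)
Inductive item : Type :=
| IIn  : form -> item
| IOut : form -> item
| IComp : form -> list item -> item.

Definition seq := list item.

Fixpoint input_item (x : item) : Prop :=
  match x with
  | IIn _ => True
  | IOut _ => False
  | IComp _ u =>
      (fix go (l : list item) : Prop :=
         match l with [] => True | y :: t => input_item y /\ go t end) u
  end.
Definition input_seq (s : seq) : Prop := Forall input_item s.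

Fixpoint nested_item (x : item) : Prop :=
  match x with
  | IIn _ => False
  | IOut _ => True
  | IComp _ u =>
      (fix go (l : list item) : Prop :=
         match l with
         | [] => False
         | y :: t => (nested_item y /\ input_seq t) \/ (input_item y /\ go t)
         end) u
  end.
Fixpoint nested_seq (s : seq) : Prop :=
  match s with
  | [] => False
  | y :: t => (nested_item y /\ input_seq t) \/ (input_item y /\ nested_seq t)
  end.

Fixpoint has_out_item (x : item) : bool :=
  match x with
  | IIn _ => false
  | IOut _ => true
  | IComp _ u => existsb has_out_item u
  end.
Definition has_out (s : seq) : bool := existsb has_out_item s.

(** Input part: i(empty) = Top, i(L,phi^bullet) = i(L) /\ phi,
    i(L,[psi:L']) = i(L) /\ (psi <>-> i(L')).  [iin_item x] is the conjunct
    contributed by an input item. *)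
Fixpoint iin_item (x : item) : form :=
  match x with
  | IIn a => a
  | IOut _ => Top (* not an input item; never used *)
  | IComp b u =>
      Dia b ((fix go (acc : form) (l : list item) : form :=
                match l with
                | [] => acc
                | y :: t => if has_out_item y then go acc t
                            else go (And acc (iin_item y)) t
                end) Top u)
  end.
Fixpoint iin (acc : form) (s : seq) : form :=
  match s with
  | [] => acc
  | y :: t => if has_out_item y then iin acc t else iin (And acc (iin_item y)) t
  end.

(** Output part: phi for phi°, psi []-> i(Gamma) for [psi:Gamma]. *)
Fixpoint iout_item (x : item) : form :=
  match x with
  | IIn _ => Bot (* junk *)
  | IOut a => a
  | IComp b u =>
      Box b (Imp (iin Top u)
                 ((fix go (l : list item) : form :=
                     match l with
                     | [] => Bot (* junk *)
                     | y :: t => if has_out_item y then iout_item y else go t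
                     end) u))
  end.
Fixpoint iout (s : seq) : form :=
  match s with
  | [] => Bot (* junk: never used on nested sequents *)
  | y :: t => if has_out_item y then iout_item y else iout t
  end.

Definition interp (s : seq) : form := Imp (iin Top s) (iout s).

Inductive iequiv : item -> item -> Prop :=
| ie_in a : iequiv (IIn a) (IIn a)
| ie_out a : iequiv (IOut a) (IOut a)
| ie_comp b s t : sequiv s t -> iequiv (IComp b s) (IComp b t)
with sequiv : seq -> seq -> Prop :=
| se_nil : sequiv [] []
| se_cons x y s t : iequiv x y -> sequiv s t -> sequiv (x :: s) (y :: t)
| se_swap x y s : sequiv (x :: y :: s) (y :: x :: s)
| se_trans s t u : sequiv s t -> sequiv t u -> sequiv s u.

Inductive ctx : Type :=
| CHole : seq -> ctx
| CDown : seq -> form -> ctx -> ctx.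

Fixpoint fill (c : ctx) (d : seq) : seq :=
  match c with
  | CHole l => l ++ d
  | CDown l b c' => l ++ [IComp b (fill c' d)]
  end.

Fixpoint rm_out_item (x : item) : list item :=
  match x with
  | IOut _ => []
  | IIn a => [IIn a]
  | IComp b u =>
      [IComp b ((fix go (l : list item) : list item :=
                   match l with [] => [] | y :: t => rm_out_item y ++ go t end) u)]
  end.
Definition rm_out (s : seq) : seq := flat_map rm_out_item s.

Fixpoint cdown (c : ctx) : ctx :=
  match c with
  | CHole l => CHole (rm_out l)
  | CDown l b c' => CDown (rm_out l) b (cdown c')
  end.

(** Derivability in N.IntCK; every rule instance has nested sequents as
    premisses and conclusion. *)
Inductive deriv : seq -> Prop :=
| d_init c p :
    nested_seq (fill c [IIn (Var p); IOut (Var p)]) ->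
    deriv (fill c [IIn (Var p); IOut (Var p)])
| d_botL c :
    nested_seq (fill c [IIn Bot]) -> deriv (fill c [IIn Bot])
| d_andL c a b :
    nested_seq (fill c [IIn (And a b)]) -> nested_seq (fill c [IIn a; IIn b]) ->
    deriv (fill c [IIn a; IIn b]) -> deriv (fill c [IIn (And a b)])
| d_andR c a b :
    nested_seq (fill c [IOut (And a b)]) ->
    nested_seq (fill c [IOut a]) -> nested_seq (fill c [IOut b]) ->
    deriv (fill c [IOut a]) -> deriv (fill c [IOut b]) ->
    deriv (fill c [IOut (And a b)])
| d_orL c a b :
    nested_seq (fill c [IIn (Or a b)]) ->
    nested_seq (fill c [IIn a]) -> nested_seq (fill c [IIn b]) ->
    deriv (fill c [IIn a]) -> deriv (fill c [IIn b]) ->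
    deriv (fill c [IIn (Or a b)])
| d_orR1 c a b :
    nested_seq (fill c [IOut (Or a b)]) -> nested_seq (fill c [IOut a]) ->
    deriv (fill c [IOut a]) -> deriv (fill c [IOut (Or a b)])
| d_orR2 c a b :
    nested_seq (fill c [IOut (Or a b)]) -> nested_seq (fill c [IOut b]) ->
    deriv (fill c [IOut b]) -> deriv (fill c [IOut (Or a b)])
| d_impL c a b :
    nested_seq (fill c [IIn (Imp a b)]) ->
    nested_seq (fill (cdown c) [IIn (Imp a b); IOut a]) ->
    nested_seq (fill c [IIn b]) ->
    deriv (fill (cdown c) [IIn (Imp a b); IOut a]) ->
    deriv (fill c [IIn b]) ->
    deriv (fill c [IIn (Imp a b)])
| d_impR c a b :
    nested_seq (fill c [IOut (Imp a b)]) -> nested_seq (fill c [IIn a; IOut b]) ->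
    deriv (fill c [IIn a; IOut b]) -> deriv (fill c [IOut (Imp a b)])
| d_boxL c a b e d :
    nested_seq (fill c [IIn (Box a b); IComp e d]) ->
    nested_seq (fill c [IIn (Box a b); IComp e (IIn b :: d)]) ->
    deriv [IIn a; IOut e] -> deriv [IIn e; IOut a] ->
    deriv (fill c [IIn (Box a b); IComp e (IIn b :: d)]) ->
    deriv (fill c [IIn (Box a b); IComp e d])
| d_boxR c a b :
    nested_seq (fill c [IOut (Box a b)]) -> nested_seq (fill c [IComp a [IOut b]]) ->
    deriv (fill c [IComp a [IOut b]]) -> deriv (fill c [IOut (Box a b)])
| d_diaL c a b :
    nested_seq (fill c [IIn (Dia a b)]) -> nested_seq (fill c [IComp a [IIn b]]) ->
    deriv (fill c [IComp a [IIn b]]) -> deriv (fill c [IIn (Dia a b)])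
| d_diaR c a b e d :
    nested_seq (fill c [IOut (Dia a b); IComp e d]) ->
    nested_seq (fill c [IComp e (IOut b :: d)]) ->
    deriv [IIn a; IOut e] -> deriv [IIn e; IOut a] ->
    deriv (fill c [IComp e (IOut b :: d)]) ->
    deriv (fill c [IOut (Dia a b); IComp e d])
| d_exch s t : deriv s -> sequiv s t -> deriv t.

(* Main.v *)
From Stdlib Require Import List Lia Arith Bool.
Import ListNotations.
Require Import Defs.

Definition ent C A := prf (Imp C A).

Lemma ent_thm C A : prf A -> ent C A.
Proof. intro H. exact (mp _ _ (ax1 A C) H). Qed.
Lemma ent_mp C A B : ent C (Imp A B) -> ent C A -> ent C B.
Proof. intros H1 H2. exact (mp _ _ (mp _ _ (ax2 C A B) H1) H2). Qed.
Lemma prf_comp X Y Z : prf (Imp X Y) -> prf (Imp Y Z) -> prf (Imp X Z).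
Proof. intros H1 H2. apply (ent_mp X Y Z). apply ent_thm; exact H2. exact H1. Qed.
Lemma ent_hyp0 C A : ent (And C A) A.
Proof. apply ax4. Qed.
Lemma ent_weak C A B : ent C B -> ent (And C A) B.
Proof. intro H. exact (prf_comp _ _ _ (ax3 C A) H). Qed.
Lemma ent_intro C A B : ent (And C A) B -> ent C (Imp A B).
Proof. intro H. apply (prf_comp _ _ _ (ax5 C A)).
  exact (mp _ _ (ax2 A (And C A) B) (ent_thm _ _ H)). Qed.
Lemma ent_andI C A B : ent C A -> ent C B -> ent C (And A B).
Proof. intros H1 H2. exact (ent_mp _ _ _ (ent_mp _ _ _ (ent_thm _ _ (ax5 A B)) H1) H2). Qed.
Lemma ent_andE1 C A B : ent C (And A B) -> ent C A.
Proof. intro H. exact (ent_mp _ _ _ (ent_thm _ _ (ax3 A B)) H). Qed.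
Lemma ent_andE2 C A B : ent C (And A B) -> ent C B.
Proof. intro H. exact (ent_mp _ _ _ (ent_thm _ _ (ax4 A B)) H). Qed.
Lemma ent_orI1 C A B : ent C A -> ent C (Or A B).
Proof. intro H. exact (ent_mp _ _ _ (ent_thm _ _ (ax6 A B)) H). Qed.
Lemma ent_orI2 C A B : ent C B -> ent C (Or A B).
Proof. intro H. exact (ent_mp _ _ _ (ent_thm _ _ (ax7 A B)) H). Qed.
Lemma ent_orE C A B D : ent C (Or A B) -> ent (And C A) D -> ent (And C B) D -> ent C D.
Proof. intros H H1 H2.
  exact (ent_mp _ _ _ (ent_mp _ _ _ (ent_mp _ _ _ (ent_thm _ _ (ax8 A B D)) (ent_intro _ _ _ H1)) (ent_intro _ _ _ H2)) H). Qed.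
Lemma ent_botE C A : ent C Bot -> ent C A.
Proof. intro H. exact (ent_mp _ _ _ (ent_thm _ _ (ax9 A)) H). Qed.
Lemma prf_top : prf Top.
Proof. apply ax9. Qed.
Lemma prf_ent A : ent Top A -> prf A.
Proof. intro H. exact (mp _ _ H prf_top). Qed.
Lemma ent_cut C A B : ent C A -> ent (And C A) B -> ent C B.
Proof. intros H1 H2. exact (ent_mp _ _ _ (ent_intro _ _ _ H2) H1). Qed.
Lemma ent_app C A B : prf (Imp A B) -> ent C A -> ent C B.
Proof. intros H1 H2. exact (ent_mp _ _ _ (ent_thm _ _ H1) H2). Qed.
Lemma ent_app2 C A B D : prf (Imp A (Imp B D)) -> ent C A -> ent C B -> ent C D.
Proof. intros H1 H2 H3. exact (ent_mp _ _ _ (ent_app _ _ _ H1 H2) H3). Qed.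

Ltac hyp := first [ apply ent_hyp0 | (apply ent_weak; hyp) ].
Ltac eintro := match goal with |- ent _ (Imp _ _) => apply ent_intro end.
Ltac start := apply prf_ent; repeat eintro.
Ltac happ H := apply (ent_mp _ H); [hyp|].

Lemma iff_intro A B : prf (Imp A B) -> prf (Imp B A) -> prf (Iff A B).
Proof. intros. apply prf_ent. apply ent_andI; apply ent_thm; auto. Qed.
Lemma iff_1 A B : prf (Iff A B) -> prf (Imp A B).
Proof. intro H. exact (mp _ _ (ax3 _ _) H). Qed.
Lemma iff_2 A B : prf (Iff A B) -> prf (Imp B A).
Proof. intro H. exact (mp _ _ (ax4 _ _) H). Qed.
Lemma iff_refl A : prf (Iff A A).
Proof. apply iff_intro; start; hyp. Qed.
Lemma iff_sym A B : prf (Iff A B) -> prf (Iff B A).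
Proof. intro H; apply iff_intro; [apply iff_2|apply iff_1]; auto. Qed.
Lemma iff_trans A B C : prf (Iff A B) -> prf (Iff B C) -> prf (Iff A C).
Proof. intros H1 H2; apply iff_intro.
  exact (prf_comp _ _ _ (iff_1 _ _ H1) (iff_1 _ _ H2)).
  exact (prf_comp _ _ _ (iff_2 _ _ H2) (iff_2 _ _ H1)). Qed.

Lemma box_mono f A B : prf (Imp A B) -> prf (Imp (Box f A) (Box f B)).
Proof. intro H.
  assert (E : prf (Iff A (And A B))).
  { apply iff_intro; start. apply ent_andI. hyp. apply (ent_app _ _ _ H); hyp.
    apply (ent_andE1 _ _ B); hyp. }
  apply (prf_comp _ _ _ (iff_1 _ _ (RC_box f _ _ E))).
  apply prf_ent; eintro.
  apply (ent_andE2 _ (Box f A)). apply (ent_app _ _ _ (CM_box _ _ _)); hyp. Qed.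
Lemma dia_mono f A B : prf (Imp A B) -> prf (Imp (Dia f A) (Dia f B)).
Proof. intro H.
  assert (E : prf (Iff (Or A B) B)).
  { apply iff_intro; start. apply (ent_orE _ A B). hyp. apply (ent_app _ _ _ H); hyp. hyp.
    apply ent_orI2; hyp. }
  eapply prf_comp; [|apply (iff_1 _ _ (RC_dia f _ _ E))].
  apply prf_ent; eintro. apply (ent_app _ _ _ (CM_dia _ _ _)). apply ent_orI1; hyp. Qed.
Lemma box_nec f A : prf A -> prf (Box f A).
Proof. intro H. assert (E : prf (Iff Top A)) by (apply iff_intro; start; apply ent_thm; auto using prf_top).
  exact (mp _ _ (iff_1 _ _ (RC_box f _ _ E)) (CN_box f)). Qed.
Lemma box_mono2 f A B D : prf (Imp A (Imp B D)) -> prf (Imp (Box f A) (Imp (Box f B) (Box f D))).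
Proof. intro H. start. apply (ent_app _ (Box f (And A B))).
  apply box_mono. start. apply (ent_app2 _ A B _ H); [apply (ent_andE1 _ _ B)|apply (ent_andE2 _ A)]; hyp.
  apply (ent_app _ _ _ (CC_box _ _ _)). apply ent_andI; hyp. Qed.
Lemma dia_bot f A : prf (Imp A Bot) -> prf (Imp (Dia f A) Bot).
Proof. intro H. eapply prf_comp. apply dia_mono, H. apply CN_dia. Qed.
Fixpoint item_ind2 (P : item -> Prop) (hin : forall a, P (IIn a)) (hout : forall a, P (IOut a))
  (hcomp : forall b u, Forall P u -> P (IComp b u)) (x : item) {struct x} : P x :=
  match x with
  | IIn a => hin a
  | IOut a => hout a
  | IComp b u => hcomp b u ((fix go (l : list item) : Forall P l :=
       match l with [] => Forall_nil _ | y :: t => Forall_cons y (item_ind2 P hin hout hcomp y) (go t) end) u)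
  end.

Fixpoint cnt_item (x : item) : nat :=
  match x with IIn _ => 0 | IOut _ => 1
  | IComp _ u => (fix go l := match l with [] => 0 | y :: t => cnt_item y + go t end) u end.
Fixpoint cnt (s : seq) : nat := match s with [] => 0 | y :: t => cnt_item y + cnt t end.
Fixpoint cntc (c : ctx) : nat := match c with CHole l => cnt l | CDown l _ c' => cnt l + cntc c' end.

Lemma cnt_comp b u : cnt_item (IComp b u) = cnt u.
Proof. induction u; simpl in *; auto. Qed.
Lemma cnt_app l d : cnt (l ++ d) = cnt l + cnt d.
Proof. induction l; simpl; lia. Qed.
Lemma cnt_fill c d : cnt (fill c d) = cntc c + cnt d.
Proof. induction c; cbn [fill cntc]; rewrite cnt_app; cbn [cnt]; try rewrite cnt_comp; try rewrite IHc; lia. Qed.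

Lemma has_out_app l d : has_out (l ++ d) = orb (has_out l) (has_out d).
Proof. apply existsb_app. Qed.
Lemma has_out_comp b u : has_out_item (IComp b u) = has_out u.
Proof. reflexivity. Qed.
Lemma hoc_item x : has_out_item x = negb (Nat.eqb (cnt_item x) 0).
Proof. induction x using item_ind2; [reflexivity|reflexivity|].
  rewrite has_out_comp, cnt_comp. unfold has_out. induction H; simpl; auto. rewrite H, IHForall.
  destruct (cnt_item x), (cnt l); reflexivity. Qed.
Lemma hoc s : has_out s = negb (Nat.eqb (cnt s) 0).
Proof. unfold has_out. induction s; simpl; auto. rewrite hoc_item, IHs.
  destruct (cnt_item a), (cnt s); reflexivity. Qed.

Lemma iin_comp b u : iin_item (IComp b u) = Dia b (iin Top u).
Proof. reflexivity. Qed.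
Lemma iout_comp b u : iout_item (IComp b u) = Box b (Imp (iin Top u) (iout u)).
Proof. reflexivity. Qed.
Lemma rm_out_comp b u : rm_out_item (IComp b u) = [IComp b (rm_out u)].
Proof. reflexivity. Qed.
Lemma rm_out_app l d : rm_out (l ++ d) = rm_out l ++ rm_out d.
Proof. unfold rm_out. apply flat_map_app. Qed.

Lemma rm_out_id_item x : cnt_item x = 0 -> rm_out_item x = [x].
Proof. induction x using item_ind2; [reflexivity|discriminate|].
  intro E. rewrite rm_out_comp. do 2 f_equal. rewrite cnt_comp in E.
  induction H; simpl; auto. simpl in E. unfold rm_out in *. simpl. rewrite H by lia.
  simpl. f_equal. apply IHForall. lia. Qed.
Lemma rm_out_id s : cnt s = 0 -> rm_out s = s.
Proof. induction s; simpl; auto. intro E. unfold rm_out in *; simpl.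
  rewrite rm_out_id_item by lia. simpl. f_equal. apply IHs. lia. Qed.
Lemma cnt_rm_out_item x : cnt (rm_out_item x) = 0.
Proof. induction x using item_ind2; [reflexivity|reflexivity|].
  rewrite rm_out_comp. cbn [cnt]. rewrite cnt_comp.
  induction H; simpl; auto. unfold rm_out in *; simpl. rewrite cnt_app. lia. Qed.
Lemma cnt_rm_out s : cnt (rm_out s) = 0.
Proof. induction s; simpl; auto. unfold rm_out in *; simpl. rewrite cnt_app, cnt_rm_out_item. lia. Qed.

Lemma fill_cdown c d : cntc c = 0 -> fill (cdown c) d = fill c d.
Proof. induction c; simpl; intro E. rewrite rm_out_id by lia; auto.
  rewrite rm_out_id by lia. rewrite IHc by lia. auto. Qed.
Lemma cntc_cdown c : cntc (cdown c) = 0.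
Proof. induction c; simpl; rewrite cnt_rm_out; lia. Qed.

Definition I s := iin Top s.
Lemma iin_app l d acc : iin acc (l ++ d) = iin (iin acc l) d.
Proof. revert acc; induction l; intro acc; simpl; auto. destruct (has_out_item a); auto. Qed.
Lemma iout_app l d : iout (l ++ d) = if has_out l then iout l else iout d.
Proof. induction l; simpl; auto. unfold has_out; simpl. destruct (has_out_item a); auto. Qed.

Lemma iin_acc s : forall acc, prf (Iff (iin acc s) (And acc (iin Top s))).
Proof. induction s as [|y t IH]; intro acc; simpl.
  - apply iff_intro; start. apply ent_andI. hyp. apply ent_thm, prf_top. apply (ent_andE1 _ _ Top); hyp.
  - destruct (has_out_item y). apply IH.
    pose proof (IH (And acc (iin_item y))) as H1. pose proof (IH (And Top (iin_item y))) as H2.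
    apply iff_intro; start.
    +       apply ent_cut with (1 := ent_app _ _ _ (iff_1 _ _ H1) (ent_hyp0 _ _)).
      apply ent_andI. apply (ent_andE1 _ _ (iin_item y)). apply (ent_andE1 _ _ (iin Top t)). hyp.
      apply (ent_app _ _ _ (iff_2 _ _ H2)). apply ent_andI. apply ent_andI. apply ent_thm, prf_top.
      apply (ent_andE2 _ acc). apply (ent_andE1 _ _ (iin Top t)). hyp.
      apply (ent_andE2 _ (And acc (iin_item y))). hyp.
    + apply (ent_app _ _ _ (iff_2 _ _ H1)).
      apply ent_cut with (1 := ent_app _ _ _ (iff_1 _ _ H2) (ent_andE2 _ _ _ (ent_hyp0 _ _))).
      apply ent_andI. apply ent_andI. apply (ent_andE1 _ _ (iin (And Top (iin_item y)) t)). apply ent_weak; hyp.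
      apply (ent_andE2 _ Top). apply (ent_andE1 _ _ (iin Top t)). hyp.
      apply (ent_andE2 _ (And Top (iin_item y))). hyp.
Qed.

Lemma I_app l d : prf (Iff (I (l ++ d)) (And (I l) (I d))).
Proof. unfold I. rewrite iin_app. apply iin_acc. Qed.
Lemma Iapp_l l d : prf (Imp (I (l ++ d)) (I l)).
Proof. start. apply (ent_andE1 _ _ (I d)). apply (ent_app _ _ _ (iff_1 _ _ (I_app l d))). hyp. Qed.
Lemma Iapp_r l d : prf (Imp (I (l ++ d)) (I d)).
Proof. start. apply (ent_andE2 _ (I l)). apply (ent_app _ _ _ (iff_1 _ _ (I_app l d))). hyp. Qed.
Lemma Iapp_mk l d : prf (Imp (I l) (Imp (I d) (I (l ++ d)))).
Proof. start. apply (ent_app _ _ _ (iff_2 _ _ (I_app l d))). apply ent_andI; hyp. Qed.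

Lemma has_out_single x : has_out [x] = has_out_item x.
Proof. unfold has_out; simpl. apply orb_false_r. Qed.
Lemma I_single_in x : has_out_item x = false -> I [x] = And Top (iin_item x).
Proof. intro H. unfold I. cbn [iin]. rewrite H. reflexivity. Qed.
Lemma I_single_out x : has_out_item x = true -> I [x] = Top.
Proof. intro H. unfold I. cbn [iin]. rewrite H. reflexivity. Qed.
Lemma iout_single x : has_out_item x = true -> iout [x] = iout_item x.
Proof. intro H. cbn [iout]. rewrite H. reflexivity. Qed.

Definition V d := if has_out d then prf (interp d) else prf (Imp (I d) Bot).
Definition S2 d1 d1' d2 := if has_out d2 then prf (Imp (interp d1) (Imp (interp d1') (interp d2)))
  else prf (Imp (I d2) (Or (I d1) (I d1'))).

Lemma V_app l d : cnt l + cnt d <= 1 -> V d -> V (l ++ d).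
Proof. unfold V, interp. rewrite has_out_app, iout_app, !hoc. intros Hc HV.
  destruct (Nat.eqb_spec (cnt l) 0), (Nat.eqb_spec (cnt d) 0); simpl in *; try lia.
  - exact (prf_comp _ _ _ (Iapp_r l d) HV).
  - start. apply (ent_app _ _ _ HV). apply (ent_app _ _ _ (Iapp_r l d)). hyp.
  - start. apply ent_botE. apply (ent_app _ _ _ HV). apply (ent_app _ _ _ (Iapp_r l d)). hyp.
Qed.

Lemma V_comp b X : V X -> V [IComp b X].
Proof. unfold V, interp. rewrite has_out_single, has_out_comp. intro HV.
  destruct (has_out X) eqn:E.
  - rewrite iout_single, I_single_out by (rewrite has_out_comp; auto). rewrite iout_comp.
    apply ent_thm. apply box_nec. exact HV.
  - rewrite I_single_in by (rewrite has_out_comp; auto). rewrite iin_comp.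
    start. apply (ent_app _ _ _ (dia_bot b _ HV)). apply (ent_andE2 _ Top). hyp.
Qed.

Lemma V_fill c d : cntc c + cnt d <= 1 -> V d -> V (fill c d).
Proof. induction c; cbn [fill cntc]; intros Hc HV.
  - apply V_app; auto.
  - apply V_app. cbn [cnt]. rewrite cnt_comp, cnt_fill. lia.
    apply V_comp. apply IHc; auto. lia. Qed.

Lemma S2_app l d1 d1' d2 : cnt d1 = cnt d2 -> cnt d1' = cnt d2 -> cnt l + cnt d2 <= 1 ->
  S2 d1 d1' d2 -> S2 (l ++ d1) (l ++ d1') (l ++ d2).
Proof. unfold S2, interp. rewrite !has_out_app, !iout_app, !hoc. intros E1 E2 Hc HS.

  destruct (Nat.eqb_spec (cnt l) 0), (Nat.eqb_spec (cnt d2) 0); simpl in *; try lia.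
  - start. apply (ent_cut _ (Or (I d1) (I d1'))).
    apply (ent_app _ _ _ HS). apply (ent_app _ _ _ (Iapp_r l d2)). hyp.
    apply (ent_orE _ (I d1) (I d1')). hyp.
    apply ent_orI1. apply (ent_app2 _ _ _ _ (Iapp_mk l d1)).
    apply (ent_app _ _ _ (Iapp_l l d2)). hyp. hyp.
    apply ent_orI2. apply (ent_app2 _ _ _ _ (Iapp_mk l d1')).
    apply (ent_app _ _ _ (Iapp_l l d2)). hyp. hyp.
  - start. apply (ent_mp _ (I d2)). apply (ent_app2 _ _ _ _ HS).
    + eintro. apply (ent_mp _ (iin Top (l ++ d1))). hyp.
      apply (ent_app2 _ _ _ _ (Iapp_mk l d1)). apply (ent_app _ _ _ (Iapp_l l d2)). hyp. hyp.
    + eintro. apply (ent_mp _ (iin Top (l ++ d1'))). hyp.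
      apply (ent_app2 _ _ _ _ (Iapp_mk l d1')). apply (ent_app _ _ _ (Iapp_l l d2)). hyp. hyp.
    + apply (ent_app _ _ _ (Iapp_r l d2)). hyp.
  - start. apply (ent_cut _ (Or (I d1) (I d1'))).
    apply (ent_app _ _ _ HS). apply (ent_app _ _ _ (Iapp_r l d2)). hyp.
    apply (ent_orE _ (I d1) (I d1')). hyp.
    apply (ent_mp _ (iin Top (l ++ d1))). hyp. apply (ent_app2 _ _ _ _ (Iapp_mk l d1)).
    apply (ent_app _ _ _ (Iapp_l l d2)). hyp. hyp.
    apply (ent_mp _ (iin Top (l ++ d1'))). hyp. apply (ent_app2 _ _ _ _ (Iapp_mk l d1')).
    apply (ent_app _ _ _ (Iapp_l l d2)). hyp. hyp.
Qed.

Lemma S2_comp b X1 X1' X2 : cnt X1 = cnt X2 -> cnt X1' = cnt X2 -> S2 X1 X1' X2 ->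
  S2 [IComp b X1] [IComp b X1'] [IComp b X2].
Proof. unfold S2, interp. rewrite !has_out_single, !has_out_comp, !hoc. intros E1 E2 HS.
  destruct (Nat.eqb_spec (cnt X2) 0); cbn [negb] in *.
  - rewrite !I_single_in by (rewrite has_out_comp, hoc; rewrite ?E1, ?E2; destruct (Nat.eqb_spec (cnt X2) 0); auto; lia).
    rewrite !iin_comp. start.
    apply (ent_cut _ (Dia b (Or (I X1) (I X1')))).
    apply (ent_app _ _ _ (dia_mono _ _ _ HS)). apply (ent_andE2 _ Top). hyp.
    apply (ent_cut _ (Or (Dia b (I X1)) (Dia b (I X1')))).
    apply (ent_app _ _ _ (CC_dia _ _ _)). hyp.
    apply (ent_orE _ (Dia b (I X1)) (Dia b (I X1'))). hyp.
    apply ent_orI1. apply ent_andI. apply ent_thm, prf_top. hyp.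
    apply ent_orI2. apply ent_andI. apply ent_thm, prf_top. hyp.
  - assert (forall Y, cnt Y = cnt X2 -> has_out_item (IComp b Y) = true) as HH.
    { intros Y EY. rewrite has_out_comp, hoc, EY. destruct (Nat.eqb_spec (cnt X2) 0); auto; lia. }
    rewrite !iout_single, !I_single_out by auto. rewrite !iout_comp.
    start. apply (ent_app2 _ _ _ _ (box_mono2 _ _ _ _ HS)).
    apply (ent_mp _ Top). hyp. apply ent_thm, prf_top.
    apply (ent_mp _ Top). hyp. apply ent_thm, prf_top.
Qed.

Lemma S2_fill c d1 d1' d2 : cnt d1 = cnt d2 -> cnt d1' = cnt d2 -> cntc c + cnt d2 <= 1 ->
  S2 d1 d1' d2 -> S2 (fill c d1) (fill c d1') (fill c d2).
Proof. induction c; cbn [fill cntc]; intros E1 E2 Hc HS.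
  - apply S2_app; auto.
  - apply S2_app; cbn [cnt]; rewrite ?cnt_comp, ?cnt_fill; try lia.
    apply S2_comp; rewrite ?cnt_fill; try lia. apply IHc; auto. lia. Qed.

Lemma ho_true s : cnt s <> 0 -> has_out s = true.
Proof. intro H. rewrite hoc. destruct (Nat.eqb_spec (cnt s) 0); auto; lia. Qed.
Lemma ho_false s : cnt s = 0 -> has_out s = false.
Proof. intro H. rewrite hoc, H. reflexivity. Qed.
Lemma hoi_true x : cnt_item x <> 0 -> has_out_item x = true.
Proof. intro H. rewrite hoc_item. destruct (Nat.eqb_spec (cnt_item x) 0); auto; lia. Qed.
Lemma hoi_false x : cnt_item x = 0 -> has_out_item x = false.
Proof. intro H. rewrite hoc_item, H. reflexivity. Qed.

Lemma interp_app_l m d : cnt m = 0 -> interp (m ++ d) = Imp (I (m ++ d)) (iout d).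
Proof. intro H. unfold interp. rewrite iout_app, ho_false by auto. reflexivity. Qed.
Lemma interp_app_r m d : cnt m <> 0 -> interp (m ++ d) = Imp (I (m ++ d)) (iout m).
Proof. intro H. unfold interp. rewrite iout_app, ho_true by auto. reflexivity. Qed.
Lemma iout_comp1 b Y : cnt Y <> 0 -> iout [IComp b Y] = Box b (interp Y).
Proof. intro H. rewrite iout_single, iout_comp. reflexivity. rewrite has_out_comp. apply ho_true; auto. Qed.
Lemma I_comp_out b Y : cnt Y <> 0 -> I [IComp b Y] = Top.
Proof. intro H. apply I_single_out. rewrite has_out_comp. apply ho_true; auto. Qed.
Lemma I_comp_in b Y : cnt Y = 0 -> I [IComp b Y] = And Top (Dia b (I Y)).
Proof. intro H. rewrite I_single_in, iin_comp. reflexivity. rewrite has_out_comp. apply ho_false; auto. Qed.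

Lemma split_out l : cnt l = 1 -> exists l1 y l2, l = l1 ++ y :: l2 /\ cnt l1 = 0 /\ cnt_item y = 1 /\ cnt l2 = 0.
Proof. induction l as [|x t IH]; simpl; intro H. lia.
  destruct (cnt_item x) eqn:E.
  - destruct (IH H) as (l1 & y & l2 & -> & A & B & C). exists (x :: l1), y, l2.
    simpl; repeat split; auto; lia.
  - exists [], x, t. simpl; repeat split; auto; lia. Qed.

Definition Uitem y := prf (Imp (Imp (I (rm_out_item y)) (iout_item y)) (iout_item y)).
Definition Ulist l := prf (Imp (Imp (I (rm_out l)) (interp l)) (interp l)).

Lemma Ulist_gen l : (forall y, In y l -> cnt_item y = 1 -> Uitem y) -> cnt l = 1 -> Ulist l.
Proof. intros HU Hc. destruct (split_out l Hc) as (l1 & y & l2 & -> & A & B & C).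
  assert (Uy : Uitem y) by (apply HU; auto; apply in_or_app; simpl; auto).
  assert (Hy : has_out_item y = true) by (apply hoi_true; lia).
  assert (EI : forall acc, iin acc (y :: l2) = iin acc l2) by (intro; simpl; rewrite Hy; auto).
  assert (EO : iout (y :: l2) = iout_item y) by (simpl; rewrite Hy; auto).
  unfold Ulist. rewrite interp_app_l by auto. rewrite EO.
  rewrite rm_out_app. change (rm_out (y :: l2)) with (rm_out_item y ++ rm_out l2). rewrite !rm_out_id by auto.
  start. apply (ent_app _ _ _ Uy). eintro.
  apply (ent_mp _ (I (l1 ++ y :: l2))).
  apply (ent_mp _ (I (l1 ++ rm_out_item y ++ l2))). apply ent_weak; apply ent_weak; hyp.
  apply (ent_app2 _ _ _ _ (Iapp_mk _ _)).
  apply (ent_app _ _ _ (Iapp_l l1 (y :: l2))). apply ent_weak; hyp.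
  apply (ent_app2 _ _ _ _ (Iapp_mk _ _)). hyp.
  apply (ent_app _ (I (y :: l2))). unfold I; rewrite EI; start; hyp.
  apply (ent_app _ _ _ (Iapp_r l1 (y :: l2))). apply ent_weak; hyp.
  apply ent_weak; hyp.
Qed.

Lemma Uitem_all y : cnt_item y = 1 -> Uitem y.
Proof. induction y using item_ind2; intro Hc; [simpl in Hc; lia| |].
  - unfold Uitem. simpl. start. apply (ent_mp _ Top). hyp. apply ent_thm, prf_top.
  - rewrite cnt_comp in Hc.
    assert (UL : Ulist u).
    { apply Ulist_gen; auto. intros y Hy Hcy. rewrite Forall_forall in H. apply H; auto. }
    unfold Uitem. rewrite rm_out_comp, iout_comp. rewrite I_comp_in by apply cnt_rm_out.
    fold (interp u).
    start. apply (ent_app _ _ _ (box_mono _ _ _ UL)).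
    apply (ent_app _ _ _ (CFS _ _ _)). eintro.
    apply (ent_mp _ (And Top (Dia b (I (rm_out u))))). apply ent_weak; hyp.
    apply ent_andI. apply ent_thm, prf_top. hyp.
Qed.

Lemma Ulist_all l : cnt l = 1 -> Ulist l.
Proof. intro H. apply Ulist_gen; auto. intros; apply Uitem_all; auto. Qed.

Lemma cnt_ab a b : cnt [IIn (Imp a b); IOut a] = 1.
Proof. reflexivity. Qed.

Lemma ImpL_in c a b : cntc c = 0 ->
  prf (Imp (interp (fill c [IIn (Imp a b); IOut a])) (Imp (I (fill c [IIn (Imp a b)])) (I (fill c [IIn b])))).
Proof. induction c as [m|m f c IH]; cbn [fill cntc]; intro Hc.
  - rewrite interp_app_l by auto.
    change (iout [IIn (Imp a b); IOut a]) with a.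
    start. apply (ent_app2 _ _ _ _ (Iapp_mk _ _)).
    apply (ent_app _ _ _ (Iapp_l m [IIn (Imp a b)])). hyp.
    change (I [IIn b]) with (And Top b). apply ent_andI. apply ent_thm, prf_top.
    apply (ent_cut _ (And Top (Imp a b))). apply (ent_app _ _ _ (Iapp_r m [IIn (Imp a b)])). hyp.
    apply (ent_mp _ a). apply (ent_andE2 _ Top). hyp.
    apply (ent_mp _ (I (m ++ [IIn (Imp a b); IOut a]))). apply ent_weak, ent_weak; hyp.
    apply (ent_app2 _ _ _ _ (Iapp_mk _ _)).
    apply (ent_app _ _ _ (Iapp_l m [IIn (Imp a b)])). apply ent_weak; hyp.
    change (I [IIn (Imp a b); IOut a]) with (And Top (Imp a b)). hyp.
  - specialize (IH ltac:(lia)).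
    assert (C1 : cnt (fill c [IIn (Imp a b); IOut a]) <> 0) by (rewrite cnt_fill; simpl; lia).
    assert (C2 : forall x, cnt (fill c [IIn x]) = 0) by (intro; rewrite cnt_fill; simpl; lia).
    rewrite interp_app_l by lia. rewrite iout_comp1 by auto.
    set (Ya := fill c [IIn (Imp a b); IOut a]) in *.
    set (Yab := fill c [IIn (Imp a b)]) in *. set (Yb := fill c [IIn b]) in *.
    assert (Himp : prf (Imp (And (I Yab) (interp Ya)) (I Yb))).
    { start. apply (ent_app2 _ _ _ _ IH). apply (ent_andE2 _ (I Yab)); hyp. apply (ent_andE1 _ _ (interp Ya)); hyp. }
    start. apply (ent_app2 _ _ _ _ (Iapp_mk _ _)).
    apply (ent_app _ _ _ (Iapp_l m [IComp f Yab])). hyp.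
    rewrite (I_comp_in _ _ (C2 b)). apply ent_andI. apply ent_thm, prf_top.
    apply (ent_app _ _ _ (dia_mono _ _ _ Himp)).
    apply (ent_app _ _ _ (CW _ _ _)). apply ent_andI.
    + apply (ent_andE2 _ Top). rewrite <- (I_comp_in _ _ (C2 (Imp a b))).
      apply (ent_app _ _ _ (Iapp_r m [IComp f Yab])). hyp.
    + apply (ent_mp _ (I (m ++ [IComp f Ya]))). apply ent_weak; hyp.
      apply (ent_app2 _ _ _ _ (Iapp_mk _ _)).
      apply (ent_app _ _ _ (Iapp_l m [IComp f Yab])). hyp.
      rewrite (I_comp_out _ _ C1). apply ent_thm, prf_top.
Qed.

Lemma ImpL c a b : cntc c = 1 ->
  prf (Imp (interp (fill (cdown c) [IIn (Imp a b); IOut a]))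
           (Imp (interp (fill c [IIn b])) (interp (fill c [IIn (Imp a b)])))).
Proof. induction c as [l|l f c IH]; cbn [fill cntc cdown]; intro Hc.
  - rewrite (interp_app_l (rm_out l)) by apply cnt_rm_out.
    change (iout [IIn (Imp a b); IOut a]) with a. rewrite !interp_app_r by lia.
    start. apply (ent_mp _ (I l)).
    2: apply (ent_app _ _ _ (Iapp_l l [IIn (Imp a b)])); hyp.
    apply (ent_app _ _ _ (Ulist_all l Hc)). eintro. unfold interp. eintro.
    apply (ent_mp _ (I (l ++ [IIn b]))). hyp.
    apply (ent_app2 _ _ _ _ (Iapp_mk _ _)). hyp.
    change (I [IIn b]) with (And Top b). apply ent_andI. apply ent_thm, prf_top.
    apply (ent_cut _ (And Top (Imp a b))). apply (ent_app _ _ _ (Iapp_r l [IIn (Imp a b)])). hyp.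
    apply (ent_mp _ a). apply (ent_andE2 _ Top). hyp.
    apply (ent_mp _ (I (rm_out l ++ [IIn (Imp a b); IOut a]))). hyp.
    apply (ent_app2 _ _ _ _ (Iapp_mk _ _)). hyp.
    change (I [IIn (Imp a b); IOut a]) with (And Top (Imp a b)). hyp.
  - destruct (cnt l) eqn:El.
    + specialize (IH ltac:(lia)). rewrite rm_out_id by auto.
      set (D' := fill (cdown c) [IIn (Imp a b); IOut a]) in *.
      set (Hb := fill c [IIn b]) in *. set (Hab := fill c [IIn (Imp a b)]) in *.
      assert (C1 : cnt D' <> 0) by (unfold D'; rewrite cnt_fill, cntc_cdown; simpl; lia).
      assert (C2 : cnt Hb <> 0) by (unfold Hb; rewrite cnt_fill; simpl; lia).
      assert (C3 : cnt Hab <> 0) by (unfold Hab; rewrite cnt_fill; simpl; lia).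
      rewrite !interp_app_l by auto. rewrite !iout_comp1 by auto.
      start. apply (ent_app2 _ _ _ _ (box_mono2 _ _ _ _ IH)).
      * apply (ent_mp _ (I (l ++ [IComp f D']))). hyp.
        apply (ent_app2 _ _ _ _ (Iapp_mk _ _)). apply (ent_app _ _ _ (Iapp_l l [IComp f Hab])). hyp.
        rewrite I_comp_out by auto. apply ent_thm, prf_top.
      * apply (ent_mp _ (I (l ++ [IComp f Hb]))). hyp.
        apply (ent_app2 _ _ _ _ (Iapp_mk _ _)). apply (ent_app _ _ _ (Iapp_l l [IComp f Hab])). hyp.
        rewrite I_comp_out by auto. apply ent_thm, prf_top.
    + assert (Hc' : cntc c = 0) by lia. assert (Hl : cnt l = 1) by lia.
      rewrite fill_cdown by auto.
      pose proof (ImpL_in c a b Hc') as Himp0.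
      set (Ya := fill c [IIn (Imp a b); IOut a]) in *.
      set (Yb := fill c [IIn b]) in *. set (Yab := fill c [IIn (Imp a b)]) in *.
      assert (C1 : cnt Ya <> 0) by (unfold Ya; rewrite cnt_fill; simpl; lia).
      assert (C2 : cnt Yb = 0) by (unfold Yb; rewrite cnt_fill; simpl; lia).
      assert (C3 : cnt Yab = 0) by (unfold Yab; rewrite cnt_fill; simpl; lia).
      assert (Himp : prf (Imp (And (I Yab) (interp Ya)) (I Yb))).
      { start. apply (ent_app2 _ _ _ _ Himp0). apply (ent_andE2 _ (I Yab)); hyp. apply (ent_andE1 _ _ (interp Ya)); hyp. }
      rewrite (interp_app_l (rm_out l)) by apply cnt_rm_out. rewrite iout_comp1 by auto.
      rewrite !interp_app_r by lia.
      start. apply (ent_mp _ (I l)).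
      2: apply (ent_app _ _ _ (Iapp_l l [IComp f Yab])); hyp.
      apply (ent_app _ _ _ (Ulist_all l Hl)). eintro. unfold interp. eintro.
      apply (ent_mp _ (I (l ++ [IComp f Yb]))). hyp.
      apply (ent_app2 _ _ _ _ (Iapp_mk _ _)). hyp.
      rewrite (I_comp_in _ _ C2). apply ent_andI. apply ent_thm, prf_top.
      apply (ent_app _ _ _ (dia_mono _ _ _ Himp)).
      apply (ent_app _ _ _ (CW _ _ _)). apply ent_andI.
      * apply (ent_andE2 _ Top). rewrite <- (I_comp_in _ _ C3).
        apply (ent_app _ _ _ (Iapp_r l [IComp f Yab])). hyp.
      * apply (ent_mp _ (I (rm_out l ++ [IComp f Ya]))). hyp.
        apply (ent_app2 _ _ _ _ (Iapp_mk _ _)). hyp.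
        rewrite (I_comp_out _ _ C1). apply ent_thm, prf_top.
Qed.

Lemma iff_and A A' B B' : prf (Iff A A') -> prf (Iff B B') -> prf (Iff (And A B) (And A' B')).
Proof. intros H1 H2. apply iff_intro; start; apply ent_andI.
  apply (ent_app _ _ _ (iff_1 _ _ H1)); apply (ent_andE1 _ _ B); hyp.
  apply (ent_app _ _ _ (iff_1 _ _ H2)); apply (ent_andE2 _ A); hyp.
  apply (ent_app _ _ _ (iff_2 _ _ H1)); apply (ent_andE1 _ _ B'); hyp.
  apply (ent_app _ _ _ (iff_2 _ _ H2)); apply (ent_andE2 _ A'); hyp. Qed.
Lemma iff_imp A A' B B' : prf (Iff A A') -> prf (Iff B B') -> prf (Iff (Imp A B) (Imp A' B')).
Proof. intros H1 H2. apply iff_intro; start.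
  apply (ent_app _ _ _ (iff_1 _ _ H2)). apply (ent_mp _ A). hyp. apply (ent_app _ _ _ (iff_2 _ _ H1)); hyp.
  apply (ent_app _ _ _ (iff_2 _ _ H2)). apply (ent_mp _ A'). hyp. apply (ent_app _ _ _ (iff_1 _ _ H1)); hyp. Qed.

Scheme iequiv_ind2 := Minimality for iequiv Sort Prop
  with sequiv_ind2 := Minimality for sequiv Sort Prop.

Lemma swap_acc A B C : prf (Iff (And (And C A) B) (And (And C B) A)).
Proof. apply iff_intro; start; (apply ent_andI; [apply ent_andI|]).
  apply (ent_andE1 _ _ A). apply (ent_andE1 _ _ B). hyp.
  apply (ent_andE2 _ (And C A)). hyp.
  apply (ent_andE2 _ C). apply (ent_andE1 _ _ B). hyp.
  apply (ent_andE1 _ _ B). apply (ent_andE1 _ _ A). hyp.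
  apply (ent_andE2 _ (And C B)). hyp.
  apply (ent_andE2 _ C). apply (ent_andE1 _ _ A). hyp. Qed.


Definition Pi (x y : item) := cnt_item x = cnt_item y /\ prf (Iff (iin_item x) (iin_item y)) /\
  (cnt_item x <= 1 -> prf (Iff (iout_item x) (iout_item y))).
Definition Ps (s t : seq) := cnt s = cnt t /\ prf (Iff (I s) (I t)) /\
  (cnt s <= 1 -> prf (Iff (iout s) (iout t))).

Lemma I_cons x s : I (x :: s) = if has_out_item x then I s else iin (And Top (iin_item x)) s.
Proof. reflexivity. Qed.
Lemma iout_cons x s : iout (x :: s) = if has_out_item x then iout_item x else iout s.
Proof. reflexivity. Qed.

Lemma equiv_all : (forall x y, iequiv x y -> Pi x y) /\ (forall s t, sequiv s t -> Ps s t).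
Proof.
  split; [apply (iequiv_ind2 Pi Ps) | apply (sequiv_ind2 Pi Ps)]; unfold Pi, Ps.
  all: try (intros; repeat split; intros; apply iff_refl).
  all: try (intros b s t H [E [HI HO]]; rewrite !cnt_comp, !iin_comp, !iout_comp;
     repeat split; auto; [apply RC_dia; auto | intro; apply RC_box; apply iff_imp; auto]).
  all: try (intros x y s t H [E1 [HI1 HO1]] H2 [E2 [HI2 HO2]]; cbn [cnt];
     assert (Hh : has_out_item x = has_out_item y) by (rewrite !hoc_item, E1; auto);
     rewrite !I_cons, !iout_cons, <- Hh; repeat split; [lia| |];
     [ destruct (has_out_item x); auto;
       eapply iff_trans; [apply iin_acc|]; eapply iff_trans; [|apply iff_sym, iin_acc];
       apply iff_and; auto; apply iff_and; auto; apply iff_refl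
     | intro; destruct (has_out_item x); [apply HO1|apply HO2]; lia ]).
  all: try (intros s t u H1 [E1 [HI1 HO1]] H2 [E2 [HI2 HO2]]; repeat split;
     [lia | eapply iff_trans; eauto | intro; eapply iff_trans; [apply HO1|apply HO2]; lia]).
  all: intros x y s; cbn [cnt]; rewrite !I_cons, !iout_cons; repeat split; [lia| |];
  [ cbn [iin]; destruct (has_out_item x), (has_out_item y); try apply iff_refl;
    eapply iff_trans; [apply iin_acc|]; eapply iff_trans; [|apply iff_sym, iin_acc];
    apply iff_and; [apply swap_acc|apply iff_refl]
  | intro Hc; destruct (has_out_item x) eqn:Ex, (has_out_item y) eqn:Ey; cbn [iout]; rewrite ?Ex, ?Ey; try apply iff_refl;
    rewrite hoc_item in Ex, Ey; destruct (Nat.eqb_spec (cnt_item x) 0), (Nat.eqb_spec (cnt_item y) 0); simpl in *; try discriminate; lia ].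
Qed.

Lemma sequiv_interp s t : sequiv s t -> cnt s = cnt t /\ (cnt s <= 1 -> prf (interp s) -> prf (interp t)).
Proof. intro H. destruct (proj2 equiv_all s t H) as [E [HI HO]]. split; auto.
  intros Hc Hs. unfold interp. apply (mp _ _ (iff_1 _ _ (iff_imp _ _ _ _ HI (HO Hc)))). exact Hs. Qed.

Lemma input_cnt x : input_item x -> cnt_item x = 0.
Proof. induction x using item_ind2; [reflexivity|intro H; destruct H|].
  induction H as [|y t Hy Ht IH]; intro HH; [reflexivity|].
  simpl in HH |- *. destruct HH as [H1 H2]. rewrite (Hy H1). apply IH. exact H2. Qed.
Lemma input_seq_cnt s : input_seq s -> cnt s = 0.
Proof. induction 1; simpl; auto. rewrite input_cnt; auto. Qed.
Lemma nested_cnt_item x : nested_item x -> cnt_item x = 1.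
Proof. induction x using item_ind2; [intro H; destruct H|reflexivity|].
  induction H as [|y t Hy Ht IH]; intro HH; [destruct HH|].
  simpl in HH |- *. destruct HH as [[H1 H2]|[H1 H2]].
  - rewrite (Hy H1). change (1 + cnt t = 1). rewrite input_seq_cnt; auto.
  - rewrite (input_cnt _ H1). apply IH. exact H2. Qed.
Lemma nested_cnt s : nested_seq s -> cnt s = 1.
Proof. induction s; simpl; [intro H; destruct H|]. intros [[H1 H2]|[H1 H2]].
  rewrite nested_cnt_item, input_seq_cnt; auto.
  rewrite input_cnt, IHs; auto. Qed.

Ltac ptop := apply ent_thm, prf_top.

Lemma S2_andL a b : S2 [IIn a; IIn b] [IIn a; IIn b] [IIn (And a b)].
Proof. unfold S2, I, interp; simpl. start. apply ent_orI1.
  apply (ent_cut _ (And a b)). apply (ent_andE2 _ Top); hyp.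
  repeat apply ent_andI. ptop. apply (ent_andE1 _ _ b); hyp. apply (ent_andE2 _ a); hyp. Qed.
Lemma S2_andR a b : S2 [IOut a] [IOut b] [IOut (And a b)].
Proof. unfold S2, I, interp; simpl. start. apply ent_andI.
  apply (ent_mp _ Top). hyp. ptop. apply (ent_mp _ Top). hyp. ptop. Qed.
Lemma S2_orL a b : S2 [IIn a] [IIn b] [IIn (Or a b)].
Proof. unfold S2, I, interp; simpl. start.
  apply (ent_orE _ a b). apply (ent_andE2 _ Top); hyp.
  apply ent_orI1; apply ent_andI; [ptop|hyp]. apply ent_orI2; apply ent_andI; [ptop|hyp]. Qed.
Lemma S2_orR1 a b : S2 [IOut a] [IOut a] [IOut (Or a b)].
Proof. unfold S2, I, interp; simpl. start. apply ent_orI1. apply (ent_mp _ Top). hyp. ptop. Qed.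
Lemma S2_orR2 a b : S2 [IOut b] [IOut b] [IOut (Or a b)].
Proof. unfold S2, I, interp; simpl. start. apply ent_orI2. apply (ent_mp _ Top). hyp. ptop. Qed.
Lemma S2_impR a b : S2 [IIn a; IOut b] [IIn a; IOut b] [IOut (Imp a b)].
Proof. unfold S2, I, interp; simpl. start. apply (ent_mp _ (And Top a)). hyp.
  apply ent_andI; [ptop|hyp]. Qed.
Lemma S2_boxR a b : S2 [IComp a [IOut b]] [IComp a [IOut b]] [IOut (Box a b)].
Proof. unfold S2, I, interp; simpl. start.
  apply (ent_app _ (Box a (Imp Top b))). apply box_mono. start. apply (ent_mp _ Top). hyp. ptop.
  apply (ent_mp _ Top). hyp. ptop. Qed.
Lemma S2_diaL a b : S2 [IComp a [IIn b]] [IComp a [IIn b]] [IIn (Dia a b)].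
Proof. unfold S2, I, interp; simpl. start. apply ent_orI1. apply ent_andI. ptop.
  apply (ent_app _ (Dia a b)). apply dia_mono. start. apply ent_andI; [ptop|hyp].
  apply (ent_andE2 _ Top); hyp. Qed.

Lemma I2 B x : I [IIn B; x] = if has_out_item x then And Top B else And (And Top B) (iin_item x).
Proof. reflexivity. Qed.
Lemma iout2 B x : iout [IIn B; x] = if has_out_item x then iout_item x else Bot.
Proof. reflexivity. Qed.

Lemma S2_boxL a b e d : prf (Imp a e) -> prf (Imp e a) ->
  S2 [IIn (Box a b); IComp e (IIn b :: d)] [IIn (Box a b); IComp e (IIn b :: d)] [IIn (Box a b); IComp e d].
Proof. intros Hae Hea.
  assert (HB : prf (Imp (Box a b) (Box e b))) by (apply iff_1, RA_box, iff_intro; auto).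
  assert (Hb : prf (Imp (I d) (Imp b (iin (And Top b) d)))).
  { start. apply (ent_app _ _ _ (iff_2 _ _ (iin_acc d _))). apply ent_andI.
    apply ent_andI. ptop. hyp. hyp. }
  unfold S2. replace (has_out [IIn (Box a b); IComp e d]) with (has_out d)
    by (unfold has_out; simpl; rewrite orb_false_r; reflexivity).
  assert (Hd' : has_out (IIn b :: d) = has_out d) by reflexivity.
  destruct (has_out d) eqn:Hd.
  - unfold interp. rewrite !I2, !iout2, !has_out_comp, Hd', Hd, !iout_comp.
    change (iin Top (IIn b :: d)) with (iin (And Top b) d).
    change (iout (IIn b :: d)) with (iout d).
    assert (K : prf (Imp b (Imp (Imp (iin (And Top b) d) (iout d)) (Imp (I d) (iout d))))).
    { start. apply (ent_mp _ (iin (And Top b) d)). hyp. apply (ent_app2 _ _ _ _ Hb); hyp. }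
    start. apply (ent_app2 _ _ _ _ (box_mono2 _ _ _ _ K)).
    apply (ent_app _ _ _ HB). apply (ent_andE2 _ Top). hyp.
    apply (ent_mp _ (And Top (Box a b))). hyp. hyp.
  - rewrite !I2, !has_out_comp, Hd', Hd, !iin_comp.
    change (iin Top (IIn b :: d)) with (iin (And Top b) d).
    assert (K : prf (Imp (And (I d) b) (iin (And Top b) d))).
    { start. apply (ent_app2 _ _ _ _ Hb). apply (ent_andE1 _ _ b); hyp. apply (ent_andE2 _ (I d)); hyp. }
    start. apply ent_orI1. apply ent_andI. apply (ent_andE1 _ _ (Dia e (I d))). hyp.
    apply (ent_app _ _ _ (dia_mono _ _ _ K)). apply (ent_app _ _ _ (CW _ _ _)). apply ent_andI.
    apply (ent_andE2 _ (And Top (Box a b))). hyp.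
    apply (ent_app _ _ _ HB). apply (ent_andE2 _ Top). apply (ent_andE1 _ _ (Dia e (I d))). hyp.
Qed.

Lemma S2_diaR a b e d : prf (Imp a e) -> prf (Imp e a) -> cnt d = 0 ->
  S2 [IComp e (IOut b :: d)] [IComp e (IOut b :: d)] [IOut (Dia a b); IComp e d].
Proof. intros Hae Hea Hc.
  assert (HD : prf (Imp (Dia e b) (Dia a b))) by (apply iff_1, RA_dia, iff_intro; auto).
  assert (Hh : has_out [IOut (Dia a b); IComp e d] = true) by reflexivity.
  unfold S2. rewrite Hh. unfold interp at 1 2.
  assert (C1 : cnt (IOut b :: d) <> 0) by (simpl; lia).
  rewrite I_comp_out, iout_comp1 by auto.
  unfold interp. change (iin Top [IOut (Dia a b); IComp e d]) with (I [IComp e d]).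
  rewrite I_comp_in by auto. change (iout [IOut (Dia a b); IComp e d]) with (Dia a b).
  change (iin Top (IOut b :: d)) with (I d). change (iout (IOut b :: d)) with b.
  assert (K : prf (Imp (And (I d) (Imp (I d) b)) b)).
  { start. apply (ent_mp _ (I d)). apply (ent_andE2 _ (I d)); hyp. apply (ent_andE1 _ _ (Imp (I d) b)); hyp. }
  start. apply (ent_app _ _ _ HD). apply (ent_app _ _ _ (dia_mono _ _ _ K)).
  apply (ent_app _ _ _ (CW _ _ _)). apply ent_andI.
  apply (ent_andE2 _ Top). hyp.
  apply (ent_mp _ Top). hyp. ptop.
Qed.

Lemma side_imp a e : prf (interp [IIn a; IOut e]) -> prf (Imp a e).
Proof. intro H. start. apply (ent_app _ _ _ H). apply ent_andI; [ptop|hyp]. Qed.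

Ltac s2rule c Hc :=
  match goal with |- prf (interp (fill c ?d2)) =>
  match goal with IH1 : cnt (fill c ?d1) = 1 -> _, H1 : nested_seq (fill c ?d1),
                  IH2 : cnt (fill c ?d1') = 1 -> _, H2 : nested_seq (fill c ?d1') |- _ =>
    let HS := fresh "HS" in
    assert (HS : S2 (fill c d1) (fill c d1') (fill c d2));
    [ apply S2_fill; [ cbn [cnt]; rewrite ?cnt_comp; simpl; lia | cbn [cnt]; rewrite ?cnt_comp; simpl; lia
                     | rewrite cnt_fill in Hc; lia | ]
    | unfold S2 in HS; rewrite ho_true in HS by lia;
      exact (mp _ _ (mp _ _ HS (IH1 (nested_cnt _ H1))) (IH2 (nested_cnt _ H2))) ]
  end end.

Ltac s1rule c Hc :=
  match goal with |- prf (interp (fill c ?d2)) =>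
  match goal with IH1 : cnt (fill c ?d1) = 1 -> _, H1 : nested_seq (fill c ?d1) |- _ =>
    let HS := fresh "HS" in
    assert (HS : S2 (fill c d1) (fill c d1) (fill c d2));
    [ apply S2_fill; [ cbn [cnt]; rewrite ?cnt_comp; simpl; lia | cbn [cnt]; rewrite ?cnt_comp; simpl; lia
                     | rewrite cnt_fill in Hc; lia | ]
    | unfold S2 in HS; rewrite ho_true in HS by lia;
      exact (mp _ _ (mp _ _ HS (IH1 (nested_cnt _ H1))) (IH1 (nested_cnt _ H1))) ]
  end end.

Lemma main s : deriv s -> cnt s = 1 -> prf (interp s).
Proof. induction 1; intro Hc.
  - assert (HV : V (fill c [IIn (Var p); IOut (Var p)])).
    { apply V_fill. rewrite cnt_fill in Hc; lia.
      unfold V, interp, I; simpl. start. apply (ent_andE2 _ Top); hyp. }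
    unfold V in HV. rewrite ho_true in HV by lia. exact HV.
  - assert (HV : V (fill c [IIn Bot])).
    { apply V_fill. rewrite cnt_fill in Hc; lia.
      unfold V, interp, I; simpl. start. apply (ent_andE2 _ Top); hyp. }
    unfold V in HV. rewrite ho_true in HV by lia. exact HV.
  - s1rule c Hc. apply S2_andL.
  - s2rule c Hc. apply S2_andR.
  - s2rule c Hc. apply S2_orL.
  - s1rule c Hc. apply S2_orR1.
  - s1rule c Hc. apply S2_orR2.
  - assert (Hcc : cntc c = 1) by (rewrite cnt_fill in Hc; simpl in Hc; lia).
    exact (mp _ _ (mp _ _ (ImpL c a b Hcc) (IHderiv1 (nested_cnt _ H0))) (IHderiv2 (nested_cnt _ H1))).
  - s1rule c Hc. apply S2_impR.
  - s1rule c Hc. apply S2_boxL; apply side_imp; auto.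
  - s1rule c Hc. apply S2_boxR.
  - s1rule c Hc. apply S2_diaL.
  - s1rule c Hc. apply S2_diaR; try (apply side_imp; auto).
    rewrite cnt_fill in Hc. cbn [cnt] in Hc. rewrite cnt_comp in Hc. simpl in Hc. lia.
  - destruct (sequiv_interp _ _ H0) as [E T]. apply T. lia. apply IHderiv. lia.
Qed.

Theorem theorem1 : forall s : seq, nested_seq s -> deriv s -> prf (interp s).
Proof. intros s Hn Hd. apply main; auto. apply nested_cnt; auto. Qed.
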